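(* Fix a round $t$ and a nonempty set $\bm{S}_t$ of scheduled devices. For device $k$, let the local computation latency be $\mathcal{T}_k^{\rm L}=\tau D_kC_k/(f_kn_k)$ and computation energy $E_{k}^{\rm L}=\kappa\tau D_kC_kf_k^2/n_k$. Given bandwidth fraction $\theta_{k,t}\in[0,1]$ and transmit power $p_{k,t}$, the upload latency is $\mathcal{T}_{k,t}^{\rm U}=\frac{Qq}{\theta_{k,t}B\log_2(1+\frac{p_{k,t}h_{k,t}}{\theta_{k,t}BN_0})}$ and the upload energy is $E_{k,t}^{\rm U}=p_{k,t}\mathcal{T}_{k,t}^{\rm U}=\frac{\theta_{k,t}B\mathcal{T}_{k,t}^{\rm U}N_0}{h_{k,t}}\big(2^{\frac{Qq}{\theta_{k,t}B\mathcal{T}_{k,t}^{\rm U}}}-1\big)$; let $E_{k,t}=E_k^{\rm L}+E_{k,t}^{\rm U}$. Consider the problem $$\mathcal{P}_1:\ \min_{\bm{\theta}_t,\bm{p}_t}\ \sum_{k\in\bm{S}_t}q_k(t)E_{k,t}\quad\text{s.t. } \mathcal{T}_k^{\rm L}+\mathcal{T}_{k,t}^{\rm U}\le\mathcal{T}_{\max}\ \forall k,\ \ \sum_{k=1}^K\theta_{k,t}\le1,\ \ 0\le\theta_{k,t}\le1\ \forall k.$$ Then the optimal solution of $\mathcal{P}_1$ satisfies $\mathcal{T}_{k,t}^{\rm U}=\mathcal{T}_{\max}-\mathcal{T}_k^{\rm L}$, and the optimal transmit power of device $k$ satisfies $$p_{k,t}=\frac{\theta_{k,t}BN_0}{h_{k,t}}\Big(2^{\frac{Qq}{(\mathcal{T}_{\max}-\mathcal{T}_k^{\rm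 L})\theta_{k,t}B}}-1\Big).$$
   Context: Parameters: $\tau$ local iterations, $D_k$ number of local samples, $C_k$ FLOPs per sample, $f_k$ CPU frequency, $n_k$ FLOPs per cycle, $\kappa$ power coefficient, $B$ total bandwidth (Hz), $h_{k,t}>0$ channel gain, $N_0$ noise power spectral density, $Q$ number of uploaded parameters and $q$ bits per parameter, $\mathcal{T}_{\max}$ the per-round deadline, and $q_k(t)\ge0$ a virtual energy queue of device $k$ (weights). *)

(* Defs.v *)
From mathcomp Require Import all_boot all_order all_algebra.
From mathcomp Require Import all_classical all_reals all_analysis.
Set Implicit Arguments. Unset Strict Implicit. Unset Printing Implicit Defensive.
Import Order.TTheory GRing.Theory Num.Theory.
Local Open Scope ring_scope.

Section FL.
Variable R : realType.

Definition log2 (x : R) : R := ln x / ln 2.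

Definition latL (tau D C f n : R) : R := tau * D * C / (f * n).

Definition enL (kappa tau D C f n : R) : R := kappa * tau * D * C * f ^+ 2 / n.

Definition latU (Q qb B N0 h theta p : R) : R :=
  Q * qb / (theta * B * log2 (1 + p * h / (theta * B * N0))).

Definition enU (Q qb B N0 h theta p : R) : R := p * latU Q qb B N0 h theta p.

End FL.

(* Main.v *)
Require Import Defs.
From mathcomp Require Import all_boot all_order all_algebra.
From mathcomp Require Import all_classical all_reals all_analysis.
Import Order.TTheory GRing.Theory Num.Theory.
Local Open Scope ring_scope.
From mathcomp Require Import ring lra.
Set Implicit Arguments. Unset Strict Implicit.
Lemma key_exp (R : realType) (s L : R) : 0 < s -> s < 1 -> 0 < L ->
  expR (s * L) < 1 - s + s * expR L.
Proof.
move=> s0 s1 L0.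
have sL : 0 < s * L by rewrite mulr_gt0.
have h1 : 1 + (1 - s) * L < expR ((1 - s) * L).
  by apply: expR_gt1Dx; rewrite mulf_neq0 ?gt_eqF // subr_gt0.
have h2 : 1 + - (s * L) < expR (- (s * L)).
  by apply: expR_gt1Dx; rewrite oppr_eq0 gt_eqF.
have e1 : expR L = expR (s * L) * expR ((1 - s) * L) by rewrite -expRD; congr expR; ring.
have e2 : 1 = expR (s * L) * expR (- (s * L)) by rewrite -expRD addrN expR0.
have e0 := expR_gt0 (s * L).
set e := expR (s * L) in e0 e1 e2 *.
set E1 := expR ((1 - s) * L) in h1 e1.
set E2 := expR (- (s * L)) in h2 e2.
have H : 1 < (1 - s) * E2 + s * E1 by nra.
rewrite e1 [X in X - s]e2; nra.
Qed.

Lemma key_ln (R : realType) (a x y : R) : 0 < a -> 0 < x -> x < y ->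
  x * ln (1 + a * y) < y * ln (1 + a * x).
Proof.
move=> a0 x0 xy.
have y0 : 0 < y by exact: lt_trans x0 xy.
set L := ln (1 + a * y).
have L0 : 0 < L by apply: ln_gt0; rewrite ltrDl mulr_gt0.
have s0 : 0 < x / y by rewrite divr_gt0.
have s1 : x / y < 1 by rewrite ltr_pdivrMr // mul1r.
have := @key_exp _ _ _ s0 s1 L0.
rewrite lnK ?posrE ?addr_gt0 ?mulr_gt0 //.
have -> : 1 - x / y + x / y * (1 + a * y) = 1 + a * x by field; rewrite gt_eqF.
rewrite -{1}[1 + a * x]lnK ?posrE ?addr_gt0 ?mulr_gt0 // ltr_expR => H.
have -> : x * L = y * (x / y * L) by field; rewrite gt_eqF.
by rewrite ltr_pM2l.
Qed.
Section L.
Variables (R : realType) (Q qb B N0 h th : R).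
Hypotheses (Q0 : 0 < Q) (qb0 : 0 < qb) (B0 : 0 < B) (N00 : 0 < N0) (h0 : 0 < h) (th0 : 0 < th).

Let a := h / (th * B * N0).
Let a0 : 0 < a. Proof. by rewrite divr_gt0 // !mulr_gt0. Qed.
Let Xa x : x * h / (th * B * N0) = a * x.
Proof. rewrite /a; ring. Qed.
Let ln20 : 0 < ln (2 : R). Proof. by apply: ln_gt0; rewrite ltr1n. Qed.

Let lnpos x : 0 < x -> 0 < ln (1 + a * x).
Proof. by move=> x0; apply: ln_gt0; rewrite ltrDl mulr_gt0. Qed.

Lemma latUE x : 0 < x -> latU Q qb B N0 h th x = Q * qb * ln 2 / (th * B) / ln (1 + a * x).
Proof.
move=> x0; rewrite /latU /log2 Xa; have := lnpos x0; have := ln20.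
by move=> ? ?; field; rewrite !gt_eqF // ?mulr_gt0.
Qed.

Lemma latU_pos x : 0 < x -> 0 < latU Q qb B N0 h th x.
Proof. by move=> x0; rewrite latUE // !divr_gt0 ?lnpos ?mulr_gt0. Qed.

Lemma latU_lt x y : 0 < x -> x < y -> latU Q qb B N0 h th y < latU Q qb B N0 h th x.
Proof.
move=> x0 xy; have y0 : 0 < y by exact: lt_trans x0 xy.
rewrite !latUE // ltr_pM2l ?divr_gt0 ?mulr_gt0 // ltf_pV2 ?posrE ?lnpos //.
have ax : a * x < a * y by rewrite ltr_pM2l.
rewrite ltr_ln ?posrE; first by lra.
  by have := a0; nra.
by have := a0; nra.
Qed.

Lemma enU_lt x y : 0 < x -> x < y -> enU Q qb B N0 h th x < enU Q qb B N0 h th y.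
Proof.
move=> x0 xy; have y0 : 0 < y by exact: lt_trans x0 xy.
rewrite /enU !latUE //.
set K0 := Q * qb * ln 2 / (th * B).
have K00 : 0 < K0 by rewrite divr_gt0 ?mulr_gt0.
have Lx := lnpos x0; have Ly := lnpos y0.
have := key_ln a0 x0 xy.
set Lx' := ln (1 + a * x) in Lx *; set Ly' := ln (1 + a * y) in Ly *.
move=> H; rewrite -subr_gt0.
have -> : y * (K0 / Ly') - x * (K0 / Lx') = K0 * (y * Lx' - x * Ly') / (Lx' * Ly').
  by field; rewrite !gt_eqF.
apply: divr_gt0; [apply: mulr_gt0 => //; lra | exact: mulr_gt0].
Qed.

Lemma latU_opt T : 0 < T ->
  let p' := th * B * N0 / h * (powR 2 (Q * qb / (T * th * B)) - 1) in
  0 < p' /\ latU Q qb B N0 h th p' = T.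
Proof.
move=> T0 p'.
set c := Q * qb / (T * th * B).
have c0 : 0 < c by rewrite divr_gt0 ?mulr_gt0.
have pc : 1 < powR 2 c.
  by rewrite /powR pnatr_eq0 /= expR_gt1 mulr_gt0.
have p0 : 0 < p' by rewrite mulr_gt0 ?divr_gt0 ?mulr_gt0 ?subr_gt0.
split => //; rewrite /latU /log2 /p'.
have -> : th * B * N0 / h * (powR 2 c - 1) * h / (th * B * N0) = powR 2 c - 1.
  by field; rewrite !gt_eqF ?mulr_gt0.
rewrite addrC subrK ln_powR /c; field; rewrite !gt_eqF ?mulr_gt0 //.
Qed.

End L.
Unset Implicit Arguments.
Theorem proposition1 (R : realType) (K : nat) (S : {set 'I_K})
  (tau kappa B N0 Q qb Tmax : R)
  (D C f n h w : 'I_K -> R)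
  (theta p : 'I_K -> R) :
  (0 < #|S|)%N ->
  0 < tau -> 0 < kappa -> 0 < B -> 0 < N0 -> 0 < Q -> 0 < qb -> 0 < Tmax ->
  (forall k, 0 < D k) -> (forall k, 0 < C k) -> (forall k, 0 < f k) ->
  (forall k, 0 < n k) -> (forall k, 0 < h k) ->
  (forall k, k \in S -> 0 < w k) ->
  let feasible (th pw : 'I_K -> R) :=
    [/\ (forall k, k \in S ->
           [/\ 0 < th k, 0 < pw k &
               latL tau (D k) (C k) (f k) (n k)
               + latU Q qb B N0 (h k) (th k) (pw k) <= Tmax]),
        \sum_(k < K) th k <= 1 &
        (forall k, 0 <= th k <= 1)] in
  let objective (th pw : 'I_K -> R) :=
    \sum_(k in S) w k * (enL kappa tau (D k) (C k) (f k) (n k)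
                         + enU Q qb B N0 (h k) (th k) (pw k)) in
  feasible theta p ->
  (forall th pw, feasible th pw -> objective theta p <= objective th pw) ->
  forall k, k \in S ->
    latU Q qb B N0 (h k) (theta k) (p k) = Tmax - latL tau (D k) (C k) (f k) (n k)
    /\ p k = theta k * B * N0 / h k *
             (powR 2 (Q * qb / ((Tmax - latL tau (D k) (C k) (f k) (n k)) * theta k * B)) - 1).
Proof.
move=> _ tau0 kappa0 B0 N00 Q0 qb0 T0 D0 C0 f0 n0 h0 w0 feasible objective Hfeas Hopt k kS.
have Hf := Hfeas; case: Hf => Hk Hsum Hth.
have [th0 p0 lat] := Hk k kS.
set LL := latL tau (D k) (C k) (f k) (n k) in lat *.
have lpos := latU_pos Q0 qb0 B0 N00 (h0 k) th0 p0.
have TT : 0 < Tmax - LL by rewrite subr_gt0; apply: lt_le_trans lat; rewrite ltrDl.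
have [p'0 lp'] := latU_opt Q0 qb0 B0 N00 (h0 k) th0 TT.
set p' := _ * (_ - 1) in p'0 lp' *.
suff E : p k = p' by rewrite E lp'.
case: (ltgtP (p k) p') => // [lt|gt].
  have := latU_lt Q0 qb0 B0 N00 (h0 k) th0 p0 lt; rewrite lp' => H.
  by move: lat; rewrite -lerBrDl leNgt H.
exfalso.
pose pw := fun j => if j == k then p' else p j.
have Fpw : feasible theta pw.
  split => // j jS; rewrite /pw; case: eqP => [->|_]; last exact: Hk.
  by split => //; rewrite lp' addrC subrK.
have := Hopt theta pw Fpw; apply/negP; rewrite -ltNge.
rewrite /objective (bigD1 k kS) [X in _ < X](bigD1 k kS) /=.
have -> : \sum_(i in S | i != k) w i * (enL kappa tau (D i) (C i) (f i) (n i)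
             + enU Q qb B N0 (h i) (theta i) (pw i))
        = \sum_(i in S | i != k) w i * (enL kappa tau (D i) (C i) (f i) (n i)
             + enU Q qb B N0 (h i) (theta i) (p i)).
  by apply: eq_bigr => i /andP[_ /negbTE ik]; rewrite /pw ik.
rewrite ltrD2r /pw eqxx ltr_pM2l ?w0 // ltrD2l.
have := enU_lt Q0 qb0 B0 N00 (h0 k) th0 p'0 gt. done.
Qed.
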